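(* Let $G$ be a finite group with $g_2(G)\geq N$, and suppose there is an exact sequence $1\to\mathbb{Z}_n\to G\to\mathbb{Z}_m\to1$. Then $\min\{m,n\}\geq N$.
   Context: For a finite group $G$ and positive integer $N$, $r_N(G)$ is the minimum number of generators among subgroups of $G$ of index at most $N$, and $g_k(G)=\max\{N : |G|\geq N \text{ and } r_N(G)\geq k\}$. *)

(* Defs.v *)
From mathcomp Require Import all_boot all_fingroup all_solvable.
Set Implicit Arguments. Unset Strict Implicit. Unset Printing Implicit Defensive.
Local Open Scope group_scope.

(* d(H): minimum number of generators of H (min #|S| over S with <<S>> = H;
   S = H itself is a generating set, so the default value #|H| is attained). *)
Definition mingen (gT : finGroupType) (H : {set gT}) : nat :=
  \big[minn/#|H|]_(S : {set gT} | <<S>> == H) #|S|.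

Definition rN (gT : finGroupType) (N : nat) (G : {group gT}) : nat :=
  \big[minn/#|G|]_(H : {group gT} | (H \subset G) && (#|G : H| <= N)) mingen H.

Definition gk (gT : finGroupType) (k : nat) (G : {group gT}) : nat :=
  \max_(N < #|G|.+1 | (0 < (N : nat)) && (k <= rN N G)) (N : nat).

(* Main.v *)
Require Import Defs.
From mathcomp Require Import all_boot all_fingroup all_solvable.
Local Open Scope group_scope.
Set Implicit Arguments. Unset Strict Implicit.

Lemma bigmin_le_seq (I : eqType) (r : seq I) (F : I -> nat) d j :
  j \in r -> \big[minn/d]_(i <- r) F i <= F j.
Proof.
elim: r => [|x r IH] //=; rewrite inE big_cons => /orP [/eqP ->|jr].
  exact: geq_minl.
exact: leq_trans (geq_minr _ _) (IH jr).
Qed.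

Lemma bigmin_le (I : finType) (P : pred I) (F : I -> nat) d j :
  P j -> \big[minn/d]_(i | P i) F i <= F j.
Proof.
move=> Pj; rewrite -big_filter; apply: bigmin_le_seq.
by rewrite mem_filter Pj mem_index_enum.
Qed.

Lemma mingen_cyclic (gT : finGroupType) (H : {group gT}) :
  cyclic H -> mingen H <= 1%N.
Proof.
case/cyclicP => x ->; rewrite /mingen.
have := @bigmin_le _ (fun S : {set gT} => <<S>> == <[x]>) (fun S => #|S|) #|<[x]>| [set x].
by rewrite cards1; apply.
Qed.

Unset Implicit Arguments.
Theorem mainTheorem13 (gT : finGroupType) (G K : {group gT}) (N n m : nat) :
  K <| G -> cyclic K -> #|K| = n ->
  cyclic (G / K) -> #|G / K| = m ->
  N <= gk 2 G ->
  N <= minn m n.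
Proof.
move=> nKG cK Kn cGK GKm HN; apply: leq_trans HN _.
rewrite /gk; apply/bigmax_leqP => M /andP [M0 rM].
have cyc_bad : forall H : {group gT}, H \subset G -> cyclic H -> M < #|G : H|.
  move=> H sHG cH; rewrite ltnNge; apply/negP => iH.
  have : rN M G <= 1%N.
    apply: leq_trans _ (@mingen_cyclic _ H cH).
    by apply: (bigmin_le (fun H : {group gT} => mingen H)); rewrite sHG iH.
  by rewrite leqNgt (leq_trans _ rM).
have sKG := normal_sub nKG.
have h1 : M < m.
  rewrite -GKm card_quotient ?normal_norm //; exact: cyc_bad.
have h2 : M < n.
  have [y defy] := cyclicP cGK.
  have : y \in G / K by rewrite defy cycle_id.
  case/morphimP => x Nx Gx defyx.
  have sxG : <[x]> \subset G by rewrite cycle_subG.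
  apply: leq_trans (cyc_bad _ sxG (cycle_cyclic x)) _.
  have hm : m <= #[x].
    rewrite -GKm defy defyx -orderE; apply: dvdn_leq; first exact: order_gt0.
    exact: morph_order.
  have hG : #|G| = (n * m)%N.
    by rewrite -Kn -GKm card_quotient ?normal_norm // Lagrange.
  have := Lagrange sxG; rewrite hG -orderE => E.
  rewrite -(leq_pmul2l (order_gt0 x)) E mulnC leq_mul2r hm orbT //.
by rewrite leq_min ltnW // ltnW.
Qed.
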